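(* For every $n\ge1$, the number of layers on $n$ channels that are in last layer normal form is $P_{n+5}$, where $(P_m)$ is the Padovan sequence defined by $P_0=1$, $P_1=P_2=0$ and $P_{m+3}=P_m+P_{m+1}$.
   Context: Channels are numbered $1,\ldots,n$. A layer on $n$ channels is a set of comparators $(i,j)$ with $1\le i<j\le n$ such that each channel occurs in at most one comparator of the layer. A channel is used in a layer if it occurs in some comparator of that layer. A layer is in last layer normal form if (i) every comparator in it is of the form $(i,i+1)$, and (ii) there is no $i$ with $1\le i<n$ such that both channels $i$ and $i+1$ are unused in the layer. *)

(* Defs.v *)
From mathcomp Require Import all_boot.
Set Implicit Arguments. Unset Strict Implicit. Unset Printing Implicit Defensive.

(* Channels 1..n are represented by 'I_n (channel k+1 <-> ordinal k).
   A comparator (i,j) is a pair in 'I_n * 'I_n; a layer is a finite set of them. *)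

Definition comparator (n : nat) := ('I_n * 'I_n)%type.

Definition occurs (n : nat) (k : 'I_n) (c : comparator n) : bool :=
  (c.1 == k) || (c.2 == k).

Definition is_layer (n : nat) (A : {set comparator n}) : bool :=
  [forall c in A, c.1 < c.2] &&
  [forall k : 'I_n, forall c in A, forall d in A,
     (occurs k c && occurs k d) ==> (c == d)].

Definition used (n : nat) (A : {set comparator n}) (k : 'I_n) : bool :=
  [exists c in A, occurs k c].

Definition last_layer_nf (n : nat) (A : {set comparator n}) : bool :=
  [forall c in A, (c.2 : nat) == (c.1 : nat).+1] &&
  [forall i : 'I_n, forall j : 'I_n,
     ((j : nat) == (i : nat).+1) ==> (used A i || used A j)].

Fixpoint padovan (m : nat) : nat :=
  match m with
  | 0 => 1
  | 1 => 0
  | 2 => 0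
  | (k.+1 as k1).+2 => padovan k + padovan k1
  end.

(* Main.v *)
Require Import Defs.
From mathcomp Require Import all_boot zify.
Set Implicit Arguments. Unset Strict Implicit. Unset Printing Implicit Defensive.

Fixpoint allseq (m : nat) : seq (seq bool) :=
  if m is m'.+1 then [seq true :: s | s <- allseq m'] ++ [seq false :: s | s <- allseq m']
  else [:: [::]].

Lemma cons_inj (b : bool) : injective (cons b).
Proof. by move=> x y []. Qed.

Lemma mem_allseq m s : (s \in allseq m) = (size s == m).
Proof.
elim: m s => [|m IH] [|b s] //=; rewrite mem_cat.
- by apply/orP=> [[]] /mapP [].
- case: b.
  + have -> : (true :: s \in [seq false :: s0 | s0 <- allseq m]) = false.
      by apply/negbTE/mapP=> [[? _ []]].
    by rewrite (mem_map (@cons_inj true)) IH orbF.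
  + have -> : (false :: s \in [seq true :: s0 | s0 <- allseq m]) = false.
      by apply/negbTE/mapP=> [[? _ []]].
    by rewrite (mem_map (@cons_inj false)) IH.
Qed.

Lemma uniq_allseq m : uniq (allseq m).
Proof.
elim: m => //= m IH; rewrite cat_uniq !(map_inj_uniq (@cons_inj _)) IH /=.
rewrite andbT; apply/hasP=> [[x /mapP [y _ ->] /mapP [z _]]] //.
Qed.

Fixpoint ok (x y : bool) (s : seq bool) : bool :=
  match s with
  | [::] => ~~ (x && y) && (x || y)
  | z :: r => [&& ~~ (x && y), x || y || z & ok y z r]
  end.

Definition cnt m x y := count (ok x y) (allseq m).

Lemma cntS m x y : cnt m.+1 x y =
  (if ~~ (x && y) then cnt m y true else 0) +
  (if ~~ (x && y) && (x || y) then cnt m y false else 0).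
Proof.
rewrite /cnt /= count_cat !count_map.
case: x; case: y => /=; rewrite ?orbT /=;
  by rewrite ?count_pred0 //; congr (_ + _); apply: eq_count => s /=.
Qed.

Lemma cnt_vals m :
  [/\ cnt m true false = padovan (m + 6), cnt m false true = padovan (m + 5),
      cnt m false false = padovan (m + 4) & cnt m true true = 0].
Proof.
have TT k : cnt k true true = 0.
  by case: k => [|k]; rewrite ?cntS //= /cnt; rewrite count_pred0.
elim: m => [|m [IH1 IH2 IH3 IH4]]; first by rewrite /cnt.
rewrite !cntS /= IH1 IH2 IH3 IH4 ?TT !addn0 ?add0n; split => //.
- by rewrite !addnS !addn0 /= addnC.
- by rewrite !addnS !addn0.
- by rewrite !addnS !addn0.
Qed.

Definition cond (f : nat -> bool) N :=
  (forall k, k.+1 < N -> ~~ (f k && f k.+1)) /\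
  (forall k, k.+1 < N -> f k || f k.+1 || f k.+2).

Lemma cond_S f N : cond f N.+1 <->
  [/\ 0 < N -> ~~ (f 0 && f 1), 0 < N -> f 0 || f 1 || f 2 &
      cond (fun k => f k.+1) N].
Proof.
split.
- case=> h1 h2; split; [by move=> hN; apply: h1|by move=> hN; apply: h2|split=> k hk].
  + by apply: h1.
  + by apply: h2.
- case=> h1 h2 [h3 h4]; split=> [[|k] hk|[|k] hk].
  + by apply: h1.
  + by apply: h3.
  + by apply: h2.
  + by apply: h4.
Qed.

Lemma ok_cond x y s : ok x y s <-> cond (nth false [:: x, y & s]) (size s).+2.
Proof.
elim: s x y => [|z r IH] x y.
- split.
  + case/andP=> h1 h2; apply/cond_S; split.
    * by [].
    * by rewrite /= orbF.
    * by split=> k hk.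
  + by case/cond_S=> h1 h2 _; rewrite /= (h1 isT) /=; move: (h2 isT); rewrite /= orbF.
- split.
  + by case/and3P=> h1 h2 /IH h3; apply/cond_S; split.
  + by case/cond_S=> h1 h2 /IH h3; rewrite /= (h1 isT) (h2 isT).
Qed.

Definition valid (s : seq bool) := cond (nth false (false :: s)) (size s).+1.

Lemma ok_valid s : ok true false s <-> valid s.
Proof.
split.
- by case/ok_cond/cond_S.
- by move=> h; apply/ok_cond/cond_S; split.
Qed.

Section Bij.
Variable m : nat.
Notation n := m.+1.

Definition g (s : seq bool) : {set comparator n} :=
  [set c : comparator n | ((c.2 : nat) == (c.1 : nat).+1) && nth false s c.1].

Lemma pair_eq (c d : comparator n) : (c.1 : nat) = d.1 -> (c.2 : nat) = d.2 -> c = d.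
Proof. by case: c d => [a b] [a' b'] /= h1 h2; congr pair; apply: val_inj. Qed.

Lemma nth_true_size (s : seq bool) i : nth false s i -> i < size s.
Proof. by apply: contraLR; rewrite -leqNgt => h; rewrite nth_default. Qed.

Lemma noadj s i : valid s -> nth false s i -> nth false s i.+1 -> False.
Proof.
case=> h1 _ a b; have := h1 i.+1; rewrite /= a b /=.
by have := nth_true_size b; move=> hs /(_ _)/negP; apply; lia.
Qed.

Lemma usedI (A : {set comparator n}) k c : c \in A -> occurs k c -> used A k.
Proof. by move=> cA oc; apply/existsP; exists c; rewrite cA. Qed.

Lemma occ_nat k (c : comparator n) : occurs k c -> (c.1 : nat) = k \/ (c.2 : nat) = k.
Proof. by case/orP=> /eqP ->; [left|right]. Qed.

Lemma g_ok s : size s = m -> valid s -> is_layer (g s) && last_layer_nf (g s).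
Proof.
move=> hs hv; apply/andP; split; [apply/andP; split|apply/andP; split].
- by apply/forallP=> c; apply/implyP; rewrite inE => /andP[/eqP -> _].
- apply/forallP=> k; apply/forallP=> c; apply/implyP; rewrite inE => /andP[/eqP ec nc].
  apply/forallP=> d; apply/implyP; rewrite inE => /andP[/eqP ed nd].
  apply/implyP=> /andP[/occ_nat oc /occ_nat od]; apply/eqP.
  case: oc => oc; case: od => od.
  + have e0 : (c.1 : nat) = d.1 by rewrite oc od.
    by apply: pair_eq; rewrite // ec ed e0.
  + have e0 : (c.1 : nat) = d.2 by rewrite oc od.
    exfalso; have e : (c.1 : nat) = (d.1 : nat).+1 by rewrite e0 ed.
    by apply: (noadj hv nd); rewrite -e.
  + have e0 : (c.2 : nat) = d.1 by rewrite oc od.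
    exfalso; have e : (d.1 : nat) = (c.1 : nat).+1 by rewrite -e0 ec.
    by apply: (noadj hv nc); rewrite -e.
  + have e0 : (c.2 : nat) = d.2 by rewrite oc od.
    by apply: pair_eq => //; apply: succn_inj; rewrite -ec -ed.
- by apply/forallP=> c; apply/implyP; rewrite inE => /andP[/eqP -> _].
- apply/forallP=> i; apply/forallP=> j; apply/implyP=> /eqP ej.
  have hi : i < m by have := ltn_ord j; lia.
  case: hv => _ /(_ i); rewrite hs => /(_ ltac:(lia)) /=.
  case/orP => [/orP [h|h]|h].
  + move: h; case e: (i : nat) => [|i'] //= h.
    have hi' : i' < n by lia.
    apply/orP; left; apply: (@usedI _ _ (inord i', i)); last by rewrite /occurs eqxx orbT.
    by rewrite inE /= inordK // e eqxx.
  + apply/orP; left; apply: (@usedI _ _ (i, j)); last by rewrite /occurs eqxx.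
    by rewrite inE /= ej eqxx.
  + have := nth_true_size h; rewrite hs => hj.
    apply/orP; right; apply: (@usedI _ _ (j, inord j.+1)); last by rewrite /occurs eqxx.
    by rewrite inE /= inordK ?ej ?eqxx //; lia.
Qed.

Definition F (A : {set comparator n}) (i : nat) :=
  [exists c in A, ((c.1 : nat) == i) && ((c.2 : nat) == i.+1)].

Lemma nthF A i : nth false (mkseq (F A) m) i = F A i.
Proof.
case: (ltnP i m) => h; first by rewrite nth_mkseq.
rewrite nth_default ?size_mkseq //; apply/esym/negbTE/existsP=> [[c /andP[_ /andP[_ /eqP e]]]].
by have := ltn_ord c.2; lia.
Qed.

Lemma g_onto A : is_layer A && last_layer_nf A ->
  valid (mkseq (F A) m) /\ A = g (mkseq (F A) m).
Proof.
case/andP=> /andP[L1 L2] /andP[N1 N2].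
have Hs : forall c, c \in A -> (c.2 : nat) = (c.1 : nat).+1.
  by move=> c cA; move/forallP: N1 => /(_ c); rewrite cA => /eqP.
have HF : forall i, F A i -> exists2 c, c \in A & (c.1 : nat) = i /\ (c.2 : nat) = i.+1.
  by move=> i /existsP [c /andP[cA /andP[/eqP h1 /eqP h2]]]; exists c.
have FI : forall c, c \in A -> F A c.1.
  by move=> c cA; apply/existsP; exists c; rewrite cA eqxx /= Hs.
have Hused : forall k : 'I_n, used A k -> F A k \/ (exists2 j, F A j & k = j.+1 :> nat).
  move=> k /existsP [c /andP [cA /occ_nat [] e]].
  - by left; rewrite -e; apply: FI.
  - by right; exists c.1; [apply: FI|rewrite -e Hs].
split.
- rewrite /valid size_mkseq; split=> k hk /=.
  + case: k hk => [|k] hk //=; rewrite !nthF; apply/negP=> /andP[/HF [c cA [c1 c2]] /HF [d dA [d1 d2]]].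
    have : c = d.
      move/forallP: L2 => /(_ c.2) /forallP /(_ c); rewrite cA /= => /forallP /(_ d).
      rewrite dA /= /occurs eqxx orbT /=.
      have -> : d.1 == c.2 by apply/eqP/ord_inj; rewrite d1 c2.
      by move/eqP.
    by move=> e; move: d1; rewrite -e c1; lia.
  + have hk1 : k < n by lia.
    have hk2 : k.+1 < n by lia.
    move/forallP: N2 => /(_ (inord k)) /forallP /(_ (inord k.+1)).
    rewrite !inordK // eqxx /= => /orP [] /Hused.
    * rewrite inordK //; case=> [h|[j h e]].
      - by rewrite nthF h orbT.
      - by move: h; rewrite e /= nthF => ->.
    * rewrite inordK //; case=> [h|[j h e]].
      - by rewrite /= !nthF h !orbT.
      - by move: h; case: e => ->; rewrite nthF => ->; rewrite orbT.
- apply/setP=> c; rewrite inE nthF; apply/idP/idP.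
  + by move=> cA; rewrite Hs // eqxx FI.
  + case/andP=> /eqP e /HF [d dA [d1 d2]].
    by have -> : c = d by apply: pair_eq; [rewrite d1 | rewrite d2 e].
Qed.

Lemma g_inj s1 s2 : size s1 = m -> size s2 = m -> g s1 = g s2 -> s1 = s2.
Proof.
move=> h1 h2 e; apply: (@eq_from_nth _ false); first by rewrite h1 h2.
move=> i; rewrite h1 => hi.
have := congr1 (fun A : {set comparator n} => ((inord i, inord i.+1) : comparator n) \in A) e; rewrite /= !inE /=.
by rewrite !inordK // ?eqxx //; lia.
Qed.

End Bij.

Theorem theorem3 (n : nat) (hn : 1 <= n) :
  #|[set A : {set comparator n} | is_layer A && last_layer_nf A]| = padovan (n + 5).
Proof.
case: n hn => [//|m] _.
set L := [seq s <- allseq m | ok true false s].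
have HL : forall s, (s \in L) = (size s == m) && ok true false s.
  by move=> s; rewrite mem_filter mem_allseq andbC.
have -> : #|[set A : {set comparator m.+1} | is_layer A && last_layer_nf A]| = #|map (@g m) L|.
  apply: eq_card => A; rewrite inE; apply/idP/idP.
  - move=> /g_onto [hv ->]; apply: map_f; rewrite HL size_mkseq eqxx /=.
    by apply/ok_valid.
  - case/mapP=> s; rewrite HL => /andP[/eqP hs /ok_valid hv] ->.
    exact: g_ok.
rewrite (card_uniqP _).
  rewrite size_map size_filter.
  by case: (cnt_vals m) => h _ _ _; rewrite /cnt in h; rewrite h addSn addnS.
rewrite map_inj_in_uniq ?filter_uniq ?uniq_allseq //.
move=> s1 s2; rewrite !HL => /andP[/eqP h1 _] /andP[/eqP h2 _].
exact: g_inj.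
Qed.
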